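(* Let $V_1\subset\mathbb{R}^{d_1}$ and $V_2\subset\mathbb{R}^{d_2}$ be point configurations. Then $\mathrm{Th}(V_1\times V_2)=\max(\mathrm{Th}(V_1),\mathrm{Th}(V_2))$ and $\mathrm{Lev}(V_1\times V_2)=\max(\mathrm{Lev}(V_1),\mathrm{Lev}(V_2))$.
   Context: A point configuration is a finite set $V\subset\mathbb{R}^n$. A linear function means an affine function $\ell(x)=\delta-\langle c,x\rangle$. A linear function $\ell$ nonnegative on $V$ is $k$-sos with respect to $V$ if there are polynomials $h_1,\dots,h_s$ with $\deg h_i\le k$ and $\ell(v)=\sum_i h_i(v)^2$ for all $v\in V$. The Theta rank $\mathrm{Th}(V)$ is the smallest $k\ge0$ such that every linear function nonnegative on $V$ is $k$-sos with respect to $V$. For $\ell$ nonnegative on $V$, $\{v\in V:\ell(v)=0\}$ is a face of $V$; inclusion-maximal faces different from $V$ are facets and the corresponding $\ell$ facet-defining. $V$ is $k$-level if every facet-defining linear function takes at most $k$ distinct values on $V$; the levelness $\mathrm{Lev}(V)$ is the smallest such $k$. *)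

(* Defs.v *)
From HB Require Import structures.
From mathcomp Require Import all_boot all_order all_algebra.
From mathcomp Require Import finmap mpoly.
From mathcomp Require Import reals.
From Stdlib Require Import ClassicalEpsilon.

Set Implicit Arguments.
Unset Strict Implicit.
Unset Printing Implicit Defensive.

Import Order.TTheory GRing.Theory Num.Theory.
Local Open Scope ring_scope.
Local Open Scope fset_scope.

Section PointConfigurations.
Variable R : realType.

Definition pconf (n : nat) := {fset 'rV[R]_n}.

Definition linfun (n : nat) (delta : R) (c : 'rV[R]_n) (x : 'rV[R]_n) : R :=
  delta - \sum_(i < n) c 0 i * x 0 i.

Definition nonneg_on (n : nat) (V : pconf n) (delta : R) (c : 'rV[R]_n) : Prop :=
  forall v, v \in V -> 0 <= linfun delta c v.

Definition evalpt (n : nat) (p : {mpoly R[n]}) (v : 'rV[R]_n) : R :=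
  p.@[fun i => v 0 i].

(* l is k-sos w.r.t. V: l = sum of squares of polynomials of degree <= k on V.
   (msize p = 1 + total degree of p, and 0 for p = 0.) *)
Definition k_sos (n : nat) (V : pconf n) (k : nat) (delta : R) (c : 'rV[R]_n) : Prop :=
  exists hs : seq {mpoly R[n]},
    (forall h, h \in hs -> (msize h <= k.+1)%N) /\
    forall v, v \in V -> linfun delta c v = \sum_(h <- hs) (evalpt h v) ^+ 2.

Definition theta_le (n : nat) (V : pconf n) (k : nat) : Prop :=
  forall delta c, nonneg_on V delta c -> k_sos V k delta c.

Definition is_theta_rank (n : nat) (V : pconf n) (k : nat) : Prop :=
  theta_le V k /\ forall j, theta_le V j -> (k <= j)%N.

(* Th(V): the smallest such k (chosen by classical choice; it exists for every
   finite V). *)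
Definition theta_rank (n : nat) (V : pconf n) : nat :=
  epsilon (inhabits 0%N) (fun k => is_theta_rank V k).

Definition zero_set (n : nat) (V : pconf n) (delta : R) (c : 'rV[R]_n) : pconf n :=
  [fset v in V | linfun delta c v == 0].

Definition is_face (n : nat) (V : pconf n) (F : pconf n) : Prop :=
  exists delta c, nonneg_on V delta c /\ F = zero_set V delta c.

Definition is_facet (n : nat) (V : pconf n) (F : pconf n) : Prop :=
  [/\ is_face V F, F != V &
      forall G, is_face V G -> G != V -> F `<=` G -> G = F].

Definition facet_defining (n : nat) (V : pconf n) (delta : R) (c : 'rV[R]_n) : Prop :=
  nonneg_on V delta c /\ is_facet V (zero_set V delta c).

Definition k_level (n : nat) (V : pconf n) (k : nat) : Prop :=
  forall delta c, facet_defining V delta c ->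
    (#|` [fset linfun delta c v | v in V] | <= k)%N.

Definition is_levelness (n : nat) (V : pconf n) (k : nat) : Prop :=
  k_level V k /\ forall j, k_level V j -> (k <= j)%N.

Definition levelness (n : nat) (V : pconf n) : nat :=
  epsilon (inhabits 0%N) (fun k => is_levelness V k).

Definition prod_conf (d1 d2 : nat) (V1 : pconf d1) (V2 : pconf d2) : pconf (d1 + d2) :=
  [fset row_mx x y | x in V1, y in V2].

End PointConfigurations.

(* Main.v *)
From Pilot Require Import Defs.
From HB Require Import structures.
From mathcomp Require Import all_boot all_order all_algebra.
From mathcomp Require Import finmap mpoly.
From mathcomp Require Import reals.
From Stdlib Require Import Classical.
From mathcomp Require Import zify ring lra.

Module Aux.
Import Pilot.Defs.
Set Implicit Arguments. Unset Strict Implicit.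
Import Order.TTheory GRing.Theory Num.Theory.
Local Open Scope ring_scope.


Section Poly.
Variable R : realType.

Lemma msizeM_idom n (p q : {mpoly R[n]}) :
  (msize (p * q) <= (msize p + msize q).-1)%N.
Proof.
have [->|nz_p] := eqVneq p 0; first by rewrite mul0r msize0.
have [->|nz_q] := eqVneq q 0; first by rewrite mulr0 msize0.
by rewrite msizeM.
Qed.

Lemma msize_prod_lin n k (lq : k.-tuple {mpoly R[n]}) (m : 'X_{1..k}) :
  (forall i, msize (tnth lq i) <= 2)%N ->
  (msize (\prod_(i < k) (tnth lq i) ^+ (m i)) <= (mdeg m).+1)%N.
Proof.
move=> H; rewrite mdegE.
elim/big_rec2: _ => [|i p d _ IH]; first by rewrite msize1.
apply: leq_trans (msizeM_idom _ _) _.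
have Hx : forall e, (msize (tnth lq i ^+ e) <= e.+1)%N.
  elim=> [|e IHe]; first by rewrite expr0 msize1.
  rewrite exprS; apply: leq_trans (msizeM_idom _ _) _.
  have := H i; have := IHe; move: (msize _) (msize _) => a b; lia.
have := Hx (m i); move: IH; move: (msize _) (msize _) => a b; lia.
Qed.

Lemma msize_comp n k (lq : k.-tuple {mpoly R[n]}) (p : {mpoly R[k]}) :
  (forall i, msize (tnth lq i) <= 2)%N -> (msize (p \mPo lq) <= msize p)%N.
Proof.
move=> H; rewrite comp_mpolyE; apply: leq_trans (msize_sum _ _ _) _.
apply/bigmax_leqP_seq => m mp _.
apply: leq_trans (msizeZ_le _ _) _.
apply: leq_trans (msize_prod_lin _ H) _.
exact: msize_mdeg_lt.
Qed.

Lemma msizeXU_le n (i : 'I_n) : (msize ('X_i : {mpoly R[n]}) <= 2)%N.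
Proof. by rewrite msizeX mdeg1. Qed.

Lemma msizeC_le n (c : R) : (msize (c%:MP : {mpoly R[n]}) <= 2)%N.
Proof. by rewrite msizeC; case: (c != 0). Qed.


Definition lift1 d1 d2 (h : {mpoly R[d1]}) : {mpoly R[d1 + d2]} :=
  h \mPo [tuple 'X_(lshift d2 i) | i < d1].
Definition lift2 d1 d2 (h : {mpoly R[d2]}) : {mpoly R[d1 + d2]} :=
  h \mPo [tuple 'X_(rshift d1 i) | i < d2].
Definition restr1 d1 d2 (y0 : 'rV[R]_d2) (h : {mpoly R[d1 + d2]}) : {mpoly R[d1]} :=
  h \mPo [tuple (match split i with inl j => 'X_j | inr j => (y0 0 j)%:MP end)
          | i < d1 + d2].
Definition restr2 d1 d2 (x0 : 'rV[R]_d1) (h : {mpoly R[d1 + d2]}) : {mpoly R[d2]} :=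
  h \mPo [tuple (match split i with inl j => (x0 0 j)%:MP | inr j => 'X_j end)
          | i < d1 + d2].

Lemma lift1E d1 d2 h (x : 'rV[R]_d1) (y : 'rV[R]_d2) :
  evalpt (lift1 d2 h) (row_mx x y) = evalpt h x.
Proof.
rewrite /evalpt /lift1 comp_mpoly_meval; apply: meval_eq => i.
by rewrite tnth_mktuple mevalXU row_mxEl.
Qed.

Lemma lift2E d1 d2 h (x : 'rV[R]_d1) (y : 'rV[R]_d2) :
  evalpt (lift2 d1 h) (row_mx x y) = evalpt h y.
Proof.
rewrite /evalpt /lift2 comp_mpoly_meval; apply: meval_eq => i.
by rewrite tnth_mktuple mevalXU row_mxEr.
Qed.

Lemma restr1E d1 d2 (y0 : 'rV[R]_d2) h (x : 'rV[R]_d1) :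
  evalpt (restr1 y0 h) x = evalpt h (row_mx x y0).
Proof.
rewrite /evalpt /restr1 comp_mpoly_meval; apply: meval_eq => i.
by rewrite tnth_mktuple mxE; case: split => j; rewrite ?mevalXU ?mevalC.
Qed.

Lemma restr2E d1 d2 (x0 : 'rV[R]_d1) h (y : 'rV[R]_d2) :
  evalpt (restr2 x0 h) y = evalpt h (row_mx x0 y).
Proof.
rewrite /evalpt /restr2 comp_mpoly_meval; apply: meval_eq => i.
by rewrite tnth_mktuple mxE; case: split => j; rewrite ?mevalXU ?mevalC.
Qed.

Lemma msize_lift1 d1 d2 (h : {mpoly R[d1]}) : (msize (lift1 d2 h) <= msize h)%N.
Proof. by apply: msize_comp => i; rewrite tnth_mktuple msizeXU_le. Qed.
Lemma msize_lift2 d1 d2 (h : {mpoly R[d2]}) : (msize (lift2 d1 h) <= msize h)%N.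
Proof. by apply: msize_comp => i; rewrite tnth_mktuple msizeXU_le. Qed.
Lemma msize_restr1 d1 d2 (y0 : 'rV[R]_d2) h : (msize (restr1 (d1:=d1) y0 h) <= msize h)%N.
Proof.
apply: msize_comp => i; rewrite tnth_mktuple.
by case: split => j; rewrite ?msizeXU_le ?msizeC_le.
Qed.
Lemma msize_restr2 d1 d2 (x0 : 'rV[R]_d1) h : (msize (restr2 (d2:=d2) x0 h) <= msize h)%N.
Proof.
apply: msize_comp => i; rewrite tnth_mktuple.
by case: split => j; rewrite ?msizeXU_le ?msizeC_le.
Qed.


Definition lfac n (v w : 'rV[R]_n) : {mpoly R[n]} :=
  match [pick i | v 0 i != w 0 i] with
  | Some i => (v 0 i - w 0 i)^-1 *: ('X_i - (w 0 i)%:MP)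
  | None => 1 end.

Lemma lfac_v n (v w : 'rV[R]_n) : evalpt (lfac v w) v = 1.
Proof.
rewrite /lfac /evalpt; case: pickP => [i Hi|_]; last by rewrite meval1.
by rewrite mevalZ mevalB mevalXU mevalC mulVf // subr_eq0.
Qed.

Lemma lfac_w n (v w : 'rV[R]_n) : v != w -> evalpt (lfac v w) w = 0.
Proof.
move=> nvw; rewrite /lfac /evalpt; case: pickP => [i Hi|H].
  by rewrite mevalZ mevalB mevalXU mevalC subrr mulr0.
case/eqP: nvw; apply/rowP => i.
by move: (H i) => /negbFE/eqP.
Qed.

Definition lag n (V : pconf R n) (v : 'rV[R]_n) : {mpoly R[n]} :=
  \prod_(w <- V | w != v) lfac v w.

Lemma lagE n (V : pconf R n) v u : u \in V ->
  evalpt (lag V v) u = (u == v)%:R.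
Proof.
move=> uV; rewrite /lag /evalpt rmorph_prod /=.
case: eqP => [->|/eqP nuv].
  by apply: big1 => w _; apply: lfac_v.
apply/eqP; rewrite prodf_seq_eq0; apply/hasP; exists u => //.
by rewrite nuv /= -/(evalpt _ _) lfac_w // eq_sym.
Qed.

Lemma theta_fin n (V : pconf R n) : exists k, theta_le V k.
Proof.
exists (\max_(v <- V) msize (lag V v)) => delta c Hnn.
exists [:: \sum_(v <- V) Num.sqrt (Defs.linfun delta c v) *: lag V v]; split.
  move=> h; rewrite inE => /eqP ->.
  apply: leq_trans (msize_sum _ _ _) _; apply: leqW.
  apply/bigmax_leqP_seq => v vV _; apply: leq_trans (msizeZ_le _ _) _.
  exact: leq_bigmax_seq.
move=> u uV; rewrite big_cons big_nil addr0.
rewrite /evalpt raddf_sum /= (bigD1_seq u) ?fset_uniq //= big1.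
  by rewrite mevalZ -/(evalpt _ _) lagE // eqxx mulr1 addr0 sqr_sqrtr // Hnn.
by move=> v nvu; rewrite mevalZ -/(evalpt _ _) lagE // eq_sym (negbTE nvu) mulr0.
Qed.

End Poly.

Section Min.
Lemma min_exists (P : nat -> Prop) : (exists k, P k) ->
  exists m, P m /\ forall j, P j -> (m <= j)%N.
Proof.
move=> [k Pk]; elim/ltn_ind: k Pk => k IH Pk.
case: (classic (exists j, (j < k)%N /\ P j)) => [[j [jk Pj]]|H].
  exact: IH jk Pj.
exists k; split => // j Pj; rewrite leqNgt; apply/negP => jk; apply: H; eauto.
Qed.

Lemma eps_min (P : nat -> Prop) : (exists k, P k) ->
  let m := ClassicalEpsilon.epsilon (inhabits 0%N)
             (fun k => P k /\ forall j, P j -> (k <= j)%N) in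
  P m /\ forall j, P j -> (m <= j)%N.
Proof. by move=> /min_exists H; exact: (ClassicalEpsilon.epsilon_spec (inhabits 0%N) _ H). Qed.

Lemma eps_min_eq (P : nat -> Prop) m : P m -> (forall j, P j -> (m <= j)%N) ->
  ClassicalEpsilon.epsilon (inhabits 0%N)
             (fun k => P k /\ forall j, P j -> (k <= j)%N) = m.
Proof.
move=> Pm Hm; have [] := eps_min (ex_intro _ m Pm) => /= H1 H2.
by apply/eqP; rewrite eqn_leq H2 // Hm.
Qed.
End Min.

Section Theta.
Variable R : realType.
Variables (d1 d2 : nat) (V1 : pconf R d1) (V2 : pconf R d2).

Lemma prodP z : reflect (exists x y, [/\ x \in V1, y \in V2 & z = row_mx x y])
  (z \in prod_conf V1 V2).
Proof.
apply: (iffP idP).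
  by move=> /imfset2P [x xV [y yV ->]]; exists x, y.
by move=> [x [y [xV yV ->]]]; apply: in_imfset2.
Qed.

Lemma prod_in x y : x \in V1 -> y \in V2 -> row_mx x y \in prod_conf V1 V2.
Proof. by move=> xV yV; apply/prodP; exists x, y. Qed.

Lemma linfun_row (delta : R) c1 c2 (x : 'rV[R]_d1) (y : 'rV[R]_d2) :
  Defs.linfun delta (row_mx c1 c2) (row_mx x y) =
  Defs.linfun delta c1 x + Defs.linfun 0 c2 y.
Proof.
rewrite /Defs.linfun big_split_ord /=.
under eq_bigr do rewrite !row_mxEl.
under [X in _ - (_ + X)]eq_bigr do rewrite !row_mxEr.
rewrite sub0r opprD addrA //.
Qed.

Lemma argmax_seq (T : eqType) (s : seq T) (f : T -> R) : s != [::] ->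
  exists2 x, x \in s & forall y, y \in s -> f y <= f x.
Proof.
elim: s => // a [|b s] IH _.
  by exists a; rewrite ?mem_seq1 // => y; rewrite mem_seq1 => /eqP ->.
have [x xs Hx] := IH isT.
case: (lerP (f a) (f x)) => H.
  exists x; first by rewrite inE xs orbT.
  by move=> y; rewrite inE => /orP [/eqP ->|/Hx].
exists a; first by rewrite inE eqxx.
move=> y; rewrite inE => /orP [/eqP ->//|/Hx H']; exact: le_trans H' (ltW H).
Qed.

Lemma argmax_fset n (V : pconf R n) (f : 'rV[R]_n -> R) : V != fset0 ->
  exists2 x, x \in V & forall y, y \in V -> f y <= f x.
Proof.
move=> /fset0Pn [x xV]; apply: argmax_seq (enum_fset V) f _.
apply/eqP => E; move: xV; rewrite -[x \in V]/(x \in enum_fset V).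
by rewrite E.
Qed.

Lemma linfun_shift n (delta : R) (c x : 'rV[R]_n) :
  Defs.linfun delta c x = delta + Defs.linfun 0 c x.
Proof. by rewrite /Defs.linfun sub0r. Qed.

Lemma evalptC n (a : R) (v : 'rV[R]_n) : evalpt a%:MP v = a.
Proof. by rewrite /evalpt mevalC. Qed.

Lemma linfun_row' (delta : R) c1 c2 (x : 'rV[R]_d1) (y : 'rV[R]_d2) :
  Defs.linfun delta (row_mx c1 c2) (row_mx x y) =
  delta + Defs.linfun 0 c1 x + Defs.linfun 0 c2 y.
Proof. by rewrite linfun_row (linfun_shift delta c1 x). Qed.

Lemma theta_up k1 k2 : V1 != fset0 -> V2 != fset0 ->
  theta_le V1 k1 -> theta_le V2 k2 -> theta_le (prod_conf V1 V2) (maxn k1 k2).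
Proof.
move=> n1 n2 T1 T2 delta c.
have [c1 [c2 ->]] : exists c1 c2, c = row_mx c1 c2.
  by exists (lsubmx c), (rsubmx c); rewrite hsubmxK.
move=> Hnn.
have [xs xsV Hxs] := argmax_fset (fun x => - Defs.linfun 0 c1 x) n1.
have [ys ysV Hys] := argmax_fset (fun y => - Defs.linfun 0 c2 y) n2.
set C := delta + Defs.linfun 0 c1 xs + Defs.linfun 0 c2 ys.
have C0 : 0 <= C.
  by move: (Hnn _ (prod_in xsV ysV)); rewrite linfun_row'.
have [hs1 [D1 E1]] : k_sos V1 k1 (- Defs.linfun 0 c1 xs) c1.
  apply: T1 => x xV; rewrite linfun_shift addrC subr_ge0.
  by rewrite -lerN2; apply: Hxs.
have [hs2 [D2 E2]] : k_sos V2 k2 (- Defs.linfun 0 c2 ys) c2.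
  apply: T2 => y yV; rewrite linfun_shift addrC subr_ge0.
  by rewrite -lerN2; apply: Hys.

exists ((Num.sqrt C)%:MP :: cat (map (@lift1 R d1 d2) hs1) (map (@lift2 R d1 d2) hs2)); split.
  move=> h; rewrite inE => /orP [/eqP ->|].
    by rewrite msizeC; case: (_ != 0).
  rewrite mem_cat => /orP [] /mapP [h' h'in ->].
    apply: leq_trans (msize_lift1 _ _) _; apply: leq_trans (D1 _ h'in) _.
    by rewrite ltnS leq_maxl.
  apply: leq_trans (msize_lift2 _ _) _; apply: leq_trans (D2 _ h'in) _.
  by rewrite ltnS leq_maxr.
move=> z /prodP [x [y [xV yV ->]]].
rewrite big_cons big_cat !big_map evalptC sqr_sqrtr //.
under eq_bigr do rewrite lift1E.
under [X in _ + (_ + X)]eq_bigr do rewrite lift2E.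
rewrite -E1 // -E2 // linfun_row' (linfun_shift (- _) c1 x) (linfun_shift (- _) c2 y) /C.
ring.
Qed.

Lemma linfun00 n (y : 'rV[R]_n) : Defs.linfun 0 0 y = 0.
Proof. by rewrite /Defs.linfun big1 ?subr0 // => i _; rewrite mxE mul0r. Qed.

Lemma linfun_row1 (delta : R) c1 (x : 'rV[R]_d1) (y : 'rV[R]_d2) :
  Defs.linfun delta (row_mx c1 0) (row_mx x y) = Defs.linfun delta c1 x.
Proof. by rewrite linfun_row linfun00 addr0. Qed.

Lemma linfun_row2 (delta : R) c2 (x : 'rV[R]_d1) (y : 'rV[R]_d2) :
  Defs.linfun delta (row_mx 0 c2) (row_mx x y) = Defs.linfun delta c2 y.
Proof. by rewrite linfun_row' linfun00 addr0 -linfun_shift. Qed.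

Lemma theta_down1 j : V2 != fset0 ->
  theta_le (prod_conf V1 V2) j -> theta_le V1 j.
Proof.
move=> /fset0Pn [y0 y0V] T delta c1 Hnn.
have Hp : nonneg_on (prod_conf V1 V2) delta (row_mx c1 0).
  by move=> z /prodP [x [y [xV yV ->]]]; rewrite linfun_row1; apply: Hnn.
have [hs [D E]] := T _ _ Hp.
exists (map (restr1 y0) hs); split.
  by move=> h /mapP [h' h'in ->]; apply: leq_trans (msize_restr1 _ _) (D _ h'in).
move=> x xV; rewrite -(linfun_row1 _ _ x y0) E ?prod_in // big_map.
by apply: eq_bigr => h _; rewrite restr1E.
Qed.

Lemma theta_down2 j : V1 != fset0 ->
  theta_le (prod_conf V1 V2) j -> theta_le V2 j.
Proof.
move=> /fset0Pn [x0 x0V] T delta c2 Hnn.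
have Hp : nonneg_on (prod_conf V1 V2) delta (row_mx 0 c2).
  by move=> z /prodP [x [y [xV yV ->]]]; rewrite linfun_row2; apply: Hnn.
have [hs [D E]] := T _ _ Hp.
exists (map (restr2 x0) hs); split.
  by move=> h /mapP [h' h'in ->]; apply: leq_trans (msize_restr2 _ _) (D _ h'in).
move=> y yV; rewrite -(linfun_row2 _ _ x0 y) E ?prod_in // big_map.
by apply: eq_bigr => h _; rewrite restr2E.
Qed.

Lemma theta_rankP n (V : pconf R n) : is_theta_rank V (theta_rank V).
Proof. exact: (eps_min (theta_fin V)). Qed.

Lemma theta_prod : V1 != fset0 -> V2 != fset0 ->
  theta_rank (prod_conf V1 V2) = maxn (theta_rank V1) (theta_rank V2).
Proof.
move=> n1 n2; have [A1 B1] := theta_rankP V1; have [A2 B2] := theta_rankP V2.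
apply: eps_min_eq; first exact: theta_up.
move=> j Tj; rewrite geq_max B1 ?B2 //.
  exact: theta_down2 Tj.
exact: theta_down1 Tj.
Qed.
End Theta.

Section Abstract.
Variable R : realType.
Local Open Scope fset_scope.

Section Defs1.
Variable T : choiceType.
Variable Fam : (T -> R) -> Prop.
Definition zs (V : {fset T}) (f : T -> R) := [fset v in V | f v == 0].
Definition nn (V : {fset T}) (f : T -> R) := forall v, v \in V -> 0 <= f v.
Definition aface V G := exists f, [/\ Fam f, nn V f & G = zs V f].
Definition afacet V G := [/\ aface V G, G != V &
  forall G', aface V G' -> G' != V -> G `<=` G' -> G' = G].
Definition afdef V f := [/\ Fam f, nn V f & afacet V (zs V f)].
Definition vals (V : {fset T}) (f : T -> R) := [fset f v | v in V].

Lemma zsP V f v : reflect (v \in V /\ f v = 0) (v \in zs V f).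
Proof. by rewrite !inE; apply: (iffP andP) => [[-> /eqP]|[-> ->]]. Qed.

Lemma zs_sub V f : zs V f `<=` V.
Proof. by apply/fsubsetP => v /zsP []. Qed.

Lemma valsP V f r : reflect (exists2 v, v \in V & r = f v) (r \in vals V f).
Proof. exact: imfsetP. Qed.

Lemma vals_card V f : (#|` vals V f| <= #|` V|)%N.
Proof. exact: leq_imfset_card. Qed.

Lemma facet_exists V : V != fset0 -> Fam (fun _ => 1) -> exists f, afdef V f.
Proof.
move=> nV F1.
pose Q k := exists G, [/\ aface V G, G != V & #|` G| = (#|` V| - k)%N].
have [k [[G [FG nG cG]] Hk]] : exists k, Q k /\ forall j, Q j -> (k <= j)%N.
  apply: min_exists; exists #|` V|; exists fset0; rewrite subnn cardfs0.
  split => //; last by rewrite eq_sym.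
  exists (fun _ => 1); split. by []. by move=> v _; exact: ler01.
  by apply/fsetP => v; rewrite !inE oner_eq0 andbF.
have [f [Ff nf EG]] := FG.
exists f; split => //; rewrite -EG; split => // G' FG' nG' sub.
have [f' [_ _ E']] := FG'.
have cle : (#|` G'| <= #|` V|)%N by rewrite E'; apply: fsubset_leq_card; exact: zs_sub.
have /Hk le : Q (#|` V| - #|` G'|)%N by exists G'; split => //; rewrite subKn.
apply/eqP; rewrite eq_sym eqEfcard sub /=.
move: le cle; rewrite cG; lia.
Qed.

Lemma exists_not_in (A B : {fset T}) : fsubset A B -> A != B ->
  exists2 a, a \in B & a \notin A.
Proof.
move=> sAB nAB; apply: NNPP => H; move/negP: nAB; apply.
rewrite eqEfsubset sAB /=; apply/fsubsetP => a aB.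
by apply: contraT => na; case: H; exists a.
Qed.

Lemma argmin_fset (V : {fset T}) (f : T -> R) v0 : v0 \in V ->
  exists2 x, x \in V & forall y, y \in V -> f x <= f y.
Proof.
move=> v0V; have : enum_fset V != [::].
  apply/eqP => E; move: v0V; rewrite -[v0 \in V]/(v0 \in enum_fset V).
  by rewrite E.
move/(argmax_seq (fun y => - f y)) => [x xs H].
by exists x => // y yV; rewrite -lerN2; apply: H.
Qed.
End Defs1.
End Abstract.

Section AbsProd.
Variable R : realType.
Variables (T1 T2 T : choiceType).
Variables (Fam1 : (T1 -> R) -> Prop) (Fam2 : (T2 -> R) -> Prop) (Fam : (T -> R) -> Prop).
Variable phi : T1 -> T2 -> T.
Variables (V1 : {fset T1}) (V2 : {fset T2}) (P : {fset T}).
Hypothesis HP : forall z, z \in P <-> exists x y, [/\ x \in V1, y \in V2 & z = phi x y].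
Hypothesis Hcomb : forall f1 f2, Fam1 f1 -> Fam2 f2 ->
  exists f, Fam f /\ forall x y, f (phi x y) = f1 x + f2 y.
Hypothesis Hsplit : forall f, Fam f -> exists f1 f2,
  [/\ Fam1 f1, Fam2 f2 & forall x y, f (phi x y) = f1 x + f2 y].
Hypothesis Hconst1 : forall f (c : R), Fam1 f -> Fam1 (fun x => f x + c).
Hypothesis Hzero2 : Fam2 (fun _ => 0).

Lemma phiP x y : x \in V1 -> y \in V2 -> phi x y \in P.
Proof. by move=> xV yV; apply/HP; exists x, y. Qed.

Lemma vals_eq (f : T -> R) (g : T1 -> R) y0 : y0 \in V2 ->
  (forall x y, x \in V1 -> y \in V2 -> f (phi x y) = g x) -> vals P f = vals V1 g.
Proof.
move=> y0V H; apply/fsetP => r; apply/valsP/valsP => [[z /HP [x [y [xV yV ->]]] ->]|[x xV ->]].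
  by exists x => //; rewrite H.
by exists (phi x y0); [apply: phiP | rewrite H].
Qed.

Lemma comb0 g : Fam1 g -> exists f, Fam f /\ forall x y, f (phi x y) = g x.
Proof.
move=> Fg; have [f [Ff Hf]] := Hcomb Fg Hzero2.
by exists f; split => // x y; rewrite Hf addr0.
Qed.



Lemma first_case f x x' y : afdef Fam P f -> x \in V1 -> x' \in V1 -> y \in V2 ->
  f (phi x y) = 0 -> f (phi x' y) != 0 ->
  exists g, afdef Fam1 V1 g /\ vals P f = vals V1 g.
Proof.
move=> [Ff nf [_ nZ maxZ]] xV x'V yV fxy fx'y.
have [f1 [f2 [F1 F2 Hf]]] := Hsplit Ff.
have [ys ysV Hys] := argmin_fset f2 yV.
pose m2 := f2 ys; pose g := fun a => f1 a + m2.
have Fg : Fam1 g := Hconst1 m2 F1.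
have ng : nn V1 g by move=> a aV; rewrite /g /m2 -Hf; apply: nf; apply: phiP.
have key : forall a b, a \in V1 -> b \in V2 -> f (phi a b) = 0 ->
    g a = 0 /\ f2 b = m2.
  move=> a b aV bV; rewrite Hf => H.
  have := ng a aV; have := Hys b bV; rewrite /g /m2 => h1 h2.
  split; lra.
have [gx fy] := key _ _ xV yV fxy.
have fg0 : forall a b, a \in V1 -> b \in V2 -> f (phi a b) = f1 a + f2 b.
  by move=> a b _ _; rewrite Hf.
have [hf [Fh Hh]] := comb0 Fg.
have G_face : aface Fam P (zs P hf).
  exists hf; split => // z /HP [a [b [aV bV ->]]]; rewrite Hh; exact: ng.
have G_ne : zs P hf != P.
  apply/negP => /eqP E; have : phi x' y \in zs P hf by rewrite E phiP.
  move/zsP => [_]; rewrite Hh /g -fy -Hf; exact/eqP.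
have Zsub : fsubset (zs P f) (zs P hf).
  apply/fsubsetP => z /zsP [/HP [a [b [aV bV ->]]] fz]; apply/zsP; split.
    exact: phiP.
  by rewrite Hh; case: (key _ _ aV bV fz).
have EG := maxZ _ G_face G_ne Zsub.
have const : forall b, b \in V2 -> f2 b = m2.
  move=> b bV; have : phi x b \in zs P hf by apply/zsP; split; [apply: phiP | rewrite Hh gx].
  by rewrite EG => /zsP [_ H]; case: (key _ _ xV bV H).
have fg : forall a b, a \in V1 -> b \in V2 -> f (phi a b) = g a.
  by move=> a b aV bV; rewrite Hf const.
exists g; split; last exact: vals_eq yV fg.
split => //; split.
- by exists g; split.
- apply/negP => /eqP E; have : x' \in zs V1 g by rewrite E.
  by move/zsP => [_]; rewrite -(fg x' y) //; apply/eqP.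
move=> G1 [g1 [Fg1 ng1 ->]] nG1 sub1.
have [h1 [Fh1 Hh1]] := comb0 Fg1.
have F1face : aface Fam P (zs P h1).
  exists h1; split => // z /HP [a [b [aV bV ->]]]; rewrite Hh1; exact: ng1.
have F1ne : zs P h1 != P.
  have [a aV naG] := exists_not_in (zs_sub V1 g1) nG1.
  apply/negP => /eqP E; have : phi a y \in zs P h1 by rewrite E phiP.
  move/zsP => [_]; rewrite Hh1 => ga; move/negP: naG; apply; exact/zsP.
have Z1sub : fsubset (zs P f) (zs P h1).
  apply/fsubsetP => z /zsP [/HP [a [b [aV bV ->]]] fz]; apply/zsP; split.
    exact: phiP.
  rewrite Hh1; have : a \in zs V1 g by apply/zsP; split => //; rewrite -(fg a b).
  by move/(fsubsetP sub1)/zsP => [].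
have E1 := maxZ _ F1face F1ne Z1sub.
apply/eqP; rewrite eqEfsubset sub1 andbT; apply/fsubsetP => a /zsP [aV g1a].
apply/zsP; split => //.
have : phi a y \in zs P h1 by apply/zsP; split; [apply: phiP | rewrite Hh1].
by rewrite E1 => /zsP [_]; rewrite fg.
Qed.

Lemma lift_case g x0 y0 : afdef Fam1 V1 g -> x0 \in V1 -> g x0 = 0 -> y0 \in V2 ->
  exists f, afdef Fam P f /\ vals P f = vals V1 g.
Proof.
move=> [Fg ng [_ nZ maxZ]] x0V gx0 y0V.
have [f [Ff Hf]] := comb0 Fg.
exists f; split; last by apply: (vals_eq y0V) => a b _ _; rewrite Hf.
have nf : nn P f by move=> z /HP [a [b [aV bV ->]]]; rewrite Hf; exact: ng.
split => //; split.
- by exists f.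
- apply/negP => /eqP E; have [a aV naZ] := exists_not_in (zs_sub V1 g) nZ.
  have : phi a y0 \in zs P f by rewrite E phiP.
  move/zsP => [_]; rewrite Hf => ga; move/negP: naZ; apply; exact/zsP.
move=> G [h [Fh nh ->]] nG sub.
have [h1 [h2 [F1 F2 Hh]]] := Hsplit Fh.
have h2c : forall b, b \in V2 -> h2 b = - h1 x0.
  move=> b bV; have : phi x0 b \in zs P f.
    by apply/zsP; split; [apply: phiP | rewrite Hf].
  move/(fsubsetP sub)/zsP => [_]; rewrite Hh => H; lra.
pose g1 := fun a => h1 a + - h1 x0.
have Fg1 : Fam1 g1 := Hconst1 _ F1.
have hg : forall a b, a \in V1 -> b \in V2 -> h (phi a b) = g1 a.
  by move=> a b aV bV; rewrite Hh h2c.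
have ng1 : nn V1 g1 by move=> a aV; rewrite -(hg a y0) //; apply: nh; apply: phiP.
have sub1 : fsubset (zs V1 g) (zs V1 g1).
  apply/fsubsetP => a /zsP [aV ga]; apply/zsP; split => //.
  have : phi a y0 \in zs P f by apply/zsP; split; [apply: phiP | rewrite Hf].
  by move/(fsubsetP sub)/zsP => [_]; rewrite hg.
have ne1 : zs V1 g1 != V1.
  apply/negP => /eqP E; have [z zP nzG] := exists_not_in (zs_sub P h) nG.
  move: zP nzG => /HP [a [b [aV bV ->]]] /negP; apply; apply/zsP; split.
    exact: phiP.
  rewrite hg //; have : a \in zs V1 g1 by rewrite E.
  by move/zsP => [].
have E1 : zs V1 g1 = zs V1 g by apply: maxZ => //; exists g1.
apply/eqP; rewrite eqEfsubset sub andbT; apply/fsubsetP => z /zsP [zP hz].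
move: zP hz => /HP [a [b [aV bV ->]]] hz; apply/zsP; split; first exact: phiP.
rewrite Hf; have : a \in zs V1 g1 by apply/zsP; split => //; rewrite -(hg a b).
by rewrite E1 => /zsP [].
Qed.
End AbsProd.

Section Level.
Variable R : realType.

Definition FamC n (f : 'rV[R]_n -> R) := exists delta c, forall z, f z = Defs.linfun delta c z.

Lemma zs_eqf (T : choiceType) (V : {fset T}) (f g : T -> R) : (forall z, f z = g z) -> zs V f = zs V g.
Proof. by move=> H; apply/fsetP => z; rewrite !inE H. Qed.

Lemma vals_eqf (T : choiceType) (V : {fset T}) (f g : T -> R) : (forall z, f z = g z) -> vals V f = vals V g.
Proof.
move=> H; apply/fsetP => r; apply/valsP/valsP => [[v vV ->]|[v vV ->]]; by exists v.
Qed.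

Lemma face_iff n (V : pconf R n) G : is_face V G <-> aface (@FamC n) V G.
Proof.
split => [[d [c [nn E]]]|[f [[d [c Hf]] nf E]]].
  by exists (Defs.linfun d c); split => //; exists d, c.
exists d, c; split; first by move=> v vV; rewrite -Hf; apply: nf.
by rewrite E; apply: zs_eqf.
Qed.

Lemma facet_iff n (V : pconf R n) G : is_facet V G <-> afacet (@FamC n) V G.
Proof.
split => [[F1 F2 F3]|[F1 F2 F3]]; split => //; try by apply/face_iff.
  by move=> G' /face_iff; apply: F3.
by move=> G' /face_iff; apply: F3.
Qed.

Lemma klevel_iff n (V : pconf R n) k :
  k_level V k <-> forall f, afdef (@FamC n) V f -> (#|` vals V f| <= k)%N.
Proof.
split => [H f [[d [c Hf]] nf Fc]|H d c [nn Fc]].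
  have FD : facet_defining V d c.
    split; first by move=> v vV; rewrite -Hf; apply: nf.
    have -> : zero_set V d c = zs V f by rewrite (zs_eqf V Hf).
    exact/facet_iff.
  by rewrite (vals_eqf V Hf); apply: H FD.
apply: (H (Defs.linfun d c)); split => //; first by exists d, c.
exact/facet_iff.
Qed.

Lemma levP n (V : pconf R n) : is_levelness V (levelness V).
Proof.
apply: (eps_min (ex_intro _ #|` V| _)).
by apply/klevel_iff => f _; apply: vals_card.
Qed.

Lemma FamC_const n (f : 'rV[R]_n -> R) c : FamC f -> FamC (fun x => f x + c).
Proof.
move=> [d [cc Hf]]; exists (d + c), cc => z.
by rewrite Hf (linfun_shift d cc z) (linfun_shift (d + c) cc z); ring.
Qed.

Lemma FamC0 n : FamC (fun _ : 'rV[R]_n => 0).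
Proof. by exists 0, 0 => z; rewrite linfun00. Qed.

Lemma FamC1 n : FamC (fun _ : 'rV[R]_n => 1).
Proof. by exists 1, 0 => z; rewrite linfun_shift linfun00 addr0. Qed.

Lemma vals_pos (T : choiceType) (V : {fset T}) (f : T -> R) : V != fset0 -> (0 < #|` vals V f|)%N.
Proof.
move=> /fset0Pn [v vV]; rewrite cardfs_gt0; apply/fset0Pn; exists (f v).
by apply/valsP; exists v.
Qed.

Lemma vals_le1 (T : choiceType) (V : {fset T}) (f : T -> R) :
  (forall u w, u \in V -> w \in V -> u = w) -> (#|` vals V f| <= 1)%N.
Proof.
move=> H; apply: leq_trans (vals_card _ _) _.
case/boolP: (V == fset0) => [/eqP ->|/fset0Pn [v0 v0V]]; first by rewrite cardfs0.
rewrite -(cardfs1 v0); apply: fsubset_leq_card; apply/fsubsetP => v vV.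
by rewrite inE (H _ _ vV v0V).
Qed.

Lemma single n (V : pconf R n) : afacet (@FamC n) V fset0 ->
  forall u w, u \in V -> w \in V -> u = w.
Proof.
move=> [_ _ maxF] u w uV wV.
have [//|nuw] := eqVneq u w.
pose c := u - w.
pose al (z : 'rV[R]_n) := \sum_(i < n) c 0 i * z 0 i.
have [xs xsV Hxs] := argmin_fset (fun z : 'rV[R]_n => - al z) uV.
pose f := Defs.linfun (al xs) c.
have nf : nn V f by move=> z zV; rewrite /f /Defs.linfun subr_ge0 -lerN2; apply: Hxs.
have Gf : aface (@FamC n) V (zs V f) by exists f; split => //; exists (al xs), c.
have xsG : xs \in zs V f by apply/zsP; split => //; rewrite /f /Defs.linfun subrr.
have Gne : zs V f != V.
  apply/negP => /eqP E.
  have : u \in zs V f by rewrite E.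
  have : w \in zs V f by rewrite E.
  move=> /zsP [_ fw] /zsP [_ fu].
  have sq : \sum_(i < n) c 0 i ^+ 2 = 0.
    have -> : \sum_(i < n) c 0 i ^+ 2 = al u - al w.
      rewrite /al -sumrB; apply: eq_bigr => i _.
      by rewrite -mulrBr /c !mxE expr2.
    move: fu fw; rewrite /f /Defs.linfun -/(al u) -/(al w); lra.
  have c0 : forall i, c 0 i = 0.
    move=> i; have := psumr_eq0P (P := predT) (F := fun i => c 0 i ^+ 2)
      (fun i _ => sqr_ge0 _) sq (i := i) isT.
    by move/eqP; rewrite sqrf_eq0 => /eqP.
  move/eqP: nuw; apply; apply/rowP => i; apply/eqP; rewrite -subr_eq0.
  by have := c0 i; rewrite /c !mxE => ->.
have := maxF _ Gf Gne (fsub0set _).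
by move=> E; move: xsG; rewrite E inE.
Qed.
End Level.

Section LevProd.
Variable R : realType.
Variables (d1 d2 : nat) (V1 : pconf R d1) (V2 : pconf R d2).
Local Notation P := (prod_conf V1 V2).

Lemma HP1 z : z \in P <-> exists x y, [/\ x \in V1, y \in V2 &
  z = (fun x y => row_mx x y) x y].
Proof. by split => [/prodP|H]; last apply/prodP. Qed.

Lemma HP2 z : z \in P <-> exists y x, [/\ y \in V2, x \in V1 &
  z = (fun y x => row_mx x y) y x].
Proof.
split => [/prodP [x [y [xV yV ->]]]|[y [x [yV xV ->]]]]; first by exists y, x.
by apply/prodP; exists x, y.
Qed.

Lemma Hcomb1 (f1 : 'rV[R]_d1 -> R) (f2 : 'rV[R]_d2 -> R) : FamC f1 -> FamC f2 ->
  exists f, FamC f /\ forall x y, f ((fun x y => row_mx x y) x y) = f1 x + f2 y.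
Proof.
move=> [a1 [c1 H1]] [a2 [c2 H2]].
exists (Defs.linfun (a1 + a2) (row_mx c1 c2)); split; first by exists (a1 + a2), (row_mx c1 c2).
move=> x y /=; rewrite H1 H2 linfun_row' (linfun_shift a1 c1 x) (linfun_shift a2 c2 y).
ring.
Qed.

Lemma Hcomb2 (f1 : 'rV[R]_d2 -> R) (f2 : 'rV[R]_d1 -> R) : FamC f1 -> FamC f2 ->
  exists f, FamC f /\ forall y x, f ((fun y x => row_mx x y) y x) = f1 y + f2 x.
Proof.
move=> F1 F2; have [f [Ff Hf]] := Hcomb1 F2 F1.
by exists f; split => // y x /=; rewrite Hf addrC.
Qed.

Lemma Hsplit1 (f : 'rV[R]_(d1 + d2) -> R) : FamC f -> exists f1 f2,
  [/\ FamC f1, FamC f2 & forall x y, f ((fun x y => row_mx x y) x y) = f1 x + f2 y].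
Proof.
move=> [a [c Hf]]; exists (Defs.linfun a (lsubmx c)), (Defs.linfun 0 (rsubmx c)).
split; [by exists a, (lsubmx c) | by exists 0, (rsubmx c) |].
by move=> x y /=; rewrite Hf -{1}(hsubmxK c) linfun_row.
Qed.

Lemma Hsplit2 (f : 'rV[R]_(d1 + d2) -> R) : FamC f -> exists f1 f2,
  [/\ FamC f1, FamC f2 & forall y x, f ((fun y x => row_mx x y) y x) = f1 y + f2 x].
Proof.
move=> Ff; have [f1 [f2 [F1 F2 Hf]]] := Hsplit1 Ff.
by exists f2, f1; split => // y x; rewrite Hf addrC.
Qed.

Lemma P_ne : V1 != fset0 -> V2 != fset0 -> P != fset0.
Proof.
move=> /fset0Pn [x xV] /fset0Pn [y yV]; apply/fset0Pn; exists (row_mx x y).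
exact: prod_in.
Qed.

Lemma lev_ge1 n (V : pconf R n) k : V != fset0 -> k_level V k -> (1 <= k)%N.
Proof.
move=> nV /klevel_iff H; have [f Hf] := facet_exists nV (@FamC1 R n).
exact: leq_trans (vals_pos f nV) (H f Hf).
Qed.

Lemma lev_up : V1 != fset0 -> V2 != fset0 ->
  k_level P (maxn (levelness V1) (levelness V2)).
Proof.
move=> n1 n2; have [L1 _] := levP V1; have [L2 _] := levP V2.
have K1 := L1; have K2 := L2; move/klevel_iff in K1; move/klevel_iff in K2.
apply/klevel_iff => f Hf.
case/boolP: (zs P f == fset0) => [/eqP Z0|].
  have [_ _ Fc] := Hf; rewrite Z0 in Fc.
  apply: leq_trans (vals_le1 f (single Fc)) _.
  by apply: leq_trans (lev_ge1 n1 L1) (leq_maxl _ _).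
move=> /fset0Pn [z0 /zsP [/prodP [x [y [xV yV ->]]] fz0]].
case: (classic (exists a a' b, [/\ a \in V1, a' \in V1, b \in V2,
     f (row_mx a b) = 0 & f (row_mx a' b) != 0])).
  move=> [a [a' [b [aV a'V bV fa fa']]]].
  have [g [Hg ->]] := first_case HP1 Hcomb1 Hsplit1 (@FamC_const R d1) (@FamC0 R d2)
    Hf aV a'V bV fa fa'.
  by apply: leq_trans (K1 _ Hg) (leq_maxl _ _).
move=> NA.
case: (classic (exists a b b', [/\ a \in V1, b \in V2, b' \in V2,
     f (row_mx a b) = 0 & f (row_mx a b') != 0])).
  move=> [a [b [b' [aV bV b'V fa fa']]]].
  have [g [Hg ->]] := first_case HP2 Hcomb2 Hsplit2 (@FamC_const R d2) (@FamC0 R d1)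
    Hf bV b'V aV fa fa'.
  by apply: leq_trans (K2 _ Hg) (leq_maxr _ _).
move=> NB; exfalso.
have [_ _ [_ nZ _]] := Hf; move/negP: nZ; apply.
rewrite eqEfsubset zs_sub /=; apply/fsubsetP => z /prodP [a [b [aV bV ->]]].
have fay : f (row_mx a y) = 0.
  apply/eqP; apply: contraT => H; case: NA; by exists x, a, y.
apply/zsP; split; first exact: prod_in.
apply/eqP; apply: contraT => H; case: NB; by exists a, y, b.
Qed.

Lemma lev_down1 j : V1 != fset0 -> V2 != fset0 -> k_level P j -> k_level V1 j.
Proof.
move=> n1 n2 Kj; have K := Kj; move/klevel_iff in K.
have [y0 y0V] := fset0Pn _ n2.
apply/klevel_iff => g Hg.
case/boolP: (zs V1 g == fset0) => [/eqP Z0|].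
  have [_ _ Fc] := Hg; rewrite Z0 in Fc.
  apply: leq_trans (vals_le1 g (single Fc)) _.
  exact: lev_ge1 (P_ne n1 n2) Kj.
move=> /fset0Pn [x0 /zsP [x0V gx0]].
have [f [Hf <-]] := lift_case HP1 Hcomb1 Hsplit1 (@FamC_const R d1) (@FamC0 R d2)
  Hg x0V gx0 y0V.
exact: K.
Qed.

Lemma lev_down2 j : V1 != fset0 -> V2 != fset0 -> k_level P j -> k_level V2 j.
Proof.
move=> n1 n2 Kj; have K := Kj; move/klevel_iff in K.
have [x0 x0V] := fset0Pn _ n1.
apply/klevel_iff => g Hg.
case/boolP: (zs V2 g == fset0) => [/eqP Z0|].
  have [_ _ Fc] := Hg; rewrite Z0 in Fc.
  apply: leq_trans (vals_le1 g (single Fc)) _.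
  exact: lev_ge1 (P_ne n1 n2) Kj.
move=> /fset0Pn [y0 /zsP [y0V gy0]].
have [f [Hf <-]] := lift_case HP2 Hcomb2 Hsplit2 (@FamC_const R d2) (@FamC0 R d1)
  Hg y0V gy0 x0V.
exact: K.
Qed.

Lemma lev_prod : V1 != fset0 -> V2 != fset0 ->
  levelness P = maxn (levelness V1) (levelness V2).
Proof.
move=> n1 n2; have [_ B1] := levP V1; have [_ B2] := levP V2.
apply: eps_min_eq; first exact: lev_up.
move=> j Kj; rewrite geq_max B1 ?B2 //.
  exact: lev_down2 Kj.
exact: lev_down1 Kj.
Qed.
End LevProd.

End Aux.
Import Aux.

Local Open Scope fset_scope.

Theorem proposition2p2 (R : realType) (d1 d2 : nat)
    (V1 : pconf R d1) (V2 : pconf R d2) :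
  V1 != fset0 -> V2 != fset0 ->
  theta_rank (prod_conf V1 V2) = maxn (theta_rank V1) (theta_rank V2) /\
  levelness (prod_conf V1 V2) = maxn (levelness V1) (levelness V2).
Proof.
move=> n1 n2; split; [exact: theta_prod | exact: lev_prod].
Qed.
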